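(* Let $p$ be a prime with $p\equiv 1\pmod 4$, let $a$ be a generator of $\mathbb{F}_p^*$, let $k=\frac{p-1}{4}$, $\theta=\exp\!\left(\frac{2\pi i}{p-1}\right)$ and $\eta=\exp\!\left(\frac{2\pi i}{p}\right)$. For $0\le x<p$ define $\varphi_x\in\mathbb{C}(\mathbb{F}_p)$ by $$\varphi_x(n)=\begin{cases}\dfrac{1}{\sqrt{p}}\,\eta^{2^{-1}a^k n^2}, & x=0,\\[2mm] \dfrac{1}{\sqrt{p(p-1)}}\displaystyle\sum_{j=1}^{p-1}\theta^{x\log_a j}\,\eta^{a^k(j-n)^2-2^{-1}a^k n^2}, & 0<x<p,\end{cases}\qquad n\in\mathbb{F}_p.$$ Then for every $0\le x<p$, $\varphi_x$ is an eigenvector of the discrete Fourier transform $F$ with eigenvalue $(-i)^x$, where $i=\sqrt{-1}$; that is, $F\varphi_x=(-i)^x\varphi_x$.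
   Context: $\mathbb{C}(\mathbb{F}_p)$ is the space of functions $\mathbb{F}_p\to\mathbb{C}$. The discrete Fourier transform is $F[\varphi](m)=\frac{1}{\sqrt{p}}\sum_{n\in\mathbb{F}_p}\eta^{mn}\varphi(n)$. Exponents of $\eta$ are computed in $\mathbb{F}_p$ (with $2^{-1}$ the inverse of $2$ in $\mathbb{F}_p$ and $a^k\in\mathbb{F}_p$); for $j\in\mathbb{F}_p^*$, $\log_a j$ is the unique $m\in\{0,\dots,p-2\}$ with $a^m=j$. *)

(* Defs.v *)
From HB Require Import structures.
From mathcomp Require Import all_boot all_order all_algebra.
From mathcomp Require Import complex.
From mathcomp Require Import reals trigo.
Set Implicit Arguments. Unset Strict Implicit. Unset Printing Implicit Defensive.
Import Order.TTheory GRing.Theory Num.Theory.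
Local Open Scope ring_scope.
Local Open Scope complex_scope.

Definition expi (R : realType) (m : nat) : R[i] :=
  Complex (cos (2 * pi / m%:R)) (sin (2 * pi / m%:R)).

Definition etaF (R : realType) (p : nat) (e : 'F_p) : R[i] :=
  expi R p ^+ (nat_of_ord e).

(* discrete logarithm: the unique m in {0,..,p-2} with a^m = j
   (computed as the least such m; unique when a is a generator and j <> 0) *)
Definition dlog (p : nat) (a j : 'F_p) : nat :=
  find (fun m => a ^+ m == j) (iota 0 p.-1).

Definition DFT (R : realType) (p : nat) (phi : 'F_p -> R[i]) : 'F_p -> R[i] :=
  fun m => (Num.sqrt (p%:R : R))^-1%:C * \sum_(n : 'F_p) etaF R (m * n) * phi n.

Definition phix (R : realType) (p : nat) (a : 'F_p) (x : nat) : 'F_p -> R[i] :=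
  let k := (p.-1 %/ 4)%N in
  let ak := a ^+ k in
  fun n =>
  if x == 0%N then
    (Num.sqrt (p%:R : R))^-1%:C * etaF R ((2%:R)^-1 * ak * n ^+ 2)
  else
    (Num.sqrt ((p * p.-1)%:R : R))^-1%:C *
      \sum_(j : 'F_p | j != 0)
        expi R p.-1 ^+ (x * dlog a j) *
        etaF R (ak * (j - n) ^+ 2 - (2%:R)^-1 * ak * n ^+ 2).

Definition imagC (R : realType) : R[i] := Complex 0 1.

(* Main.v *)
Require Import Defs.
From HB Require Import structures.
From mathcomp Require Import all_boot all_order all_algebra finfield.
From mathcomp Require Import complex.
From mathcomp Require Import reals trigo.
From mathcomp Require Import ring lra zify.
Set Implicit Arguments. Unset Strict Implicit. Unset Printing Implicit Defensive.
Import Order.TTheory GRing.Theory Num.Theory.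
Local Open Scope ring_scope.
Local Open Scope complex_scope.

Lemma cisX (R : realType) (al : R) (n : nat) :
  (Complex (cos al) (sin al)) ^+ n = Complex (cos (n%:R * al)) (sin (n%:R * al)).
Proof.
elim: n => [|n IH]; first by rewrite expr0 !mul0r cos0 sin0.
rewrite exprS IH -[n.+1]addn1 natrD mulrDl mul1r addrC cosD sinD.
simpc; congr Complex; ring.
Qed.

Lemma expiX (R : realType) (m n : nat) : expi R m ^+ n =
  Complex (cos (n%:R * (2 * pi / m%:R))) (sin (n%:R * (2 * pi / m%:R))).
Proof. exact: cisX. Qed.

Section Fp.
Variables (R : realType) (p : nat).
Hypothesis pr : prime p.
Local Notation w := (expi R p).
Local Notation e := (@etaF R p).

Lemma p_gt0 : (0 < p)%N. Proof. exact: prime_gt0. Qed.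

Lemma wp : w ^+ p = 1.
Proof.
rewrite expiX; set t := (X in cos X).
have -> : t = pi *+ 2.
  rewrite /t mulr2n; field; by rewrite pnatr_eq0 -lt0n p_gt0.
rewrite cos2pi; set u := (X in sin X).
have -> : u = pi *+ 2.
  rewrite /u mulr2n; field; by rewrite pnatr_eq0 -lt0n p_gt0.
by rewrite sin2pi.
Qed.

Lemma wX_mod n : w ^+ (n %% p) = w ^+ n.
Proof. by rewrite {2}(divn_eq n p) exprD mulnC exprM wp expr1n mul1r. Qed.

Lemma e_nat n : e n%:R = w ^+ n.
Proof. by rewrite /etaF val_Fp_nat // wX_mod. Qed.

Lemma Fp_valE (x : 'F_p) : x = (val x)%:R.
Proof. by rewrite natr_Zp. Qed.

Lemma e0 : e 0 = 1.
Proof. by rewrite /etaF expr0. Qed.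

Lemma eD x y : e (x + y) = e x * e y.
Proof. by rewrite {1}(Fp_valE x) {1}(Fp_valE y) -natrD !e_nat exprD /etaF. Qed.

Lemma w_neq0 : w != 0.
Proof. apply/eqP=> w0; move: wp; rewrite w0 expr0n; case: p pr => // n _ /eqP; by rewrite eq_sym oner_eq0. Qed.

Lemma w_conj : conjc w = w ^+ p.-1.
Proof.
have h1 : w * conjc w = 1.
  rewrite /expi; simpc; rewrite -expr2 -expr2 cos2Dsin2; congr Complex; ring.
have h2 : w * w ^+ p.-1 = 1 by rewrite -exprS prednK ?p_gt0 // wp.
by apply: (mulfI w_neq0); rewrite h1 h2.
Qed.

Lemma Fp_pred : (p.-1)%:R = -1 :> 'F_p.
Proof.
apply/eqP; rewrite -subr_eq0 opprK -mulrSr prednK ?p_gt0 //.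
by rewrite pchar_Fp_0.
Qed.

Lemma e_conj x : conjc (e x) = e (- x).
Proof.
have -> : e x = w ^+ (val x) by [].
have h : conjc (w ^+ val x) = (w ^+ p.-1) ^+ val x by rewrite -w_conj rmorphXn.
rewrite h -exprM -e_nat natrM.
by rewrite Fp_pred -Fp_valE mulN1r.
Qed.

Lemma ImcJ (z : R[i]) : complex.Im (conjc z) = - complex.Im z.
Proof. by case: z. Qed.

Lemma Im_w_pos j : (0 < j)%N -> (2 * j < p)%N -> 0 < complex.Im (w ^+ j).
Proof.
move=> j0 jp; rewrite expiX /=; apply: sin_gt0_pi.
have P0 : 0 < p%:R :> R by rewrite ltr0n p_gt0.
have J0 : 0 < j%:R :> R by rewrite ltr0n.
have JP : 2 * j%:R < p%:R :> R by rewrite -natrM ltr_nat.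
have pi0 := @pi_gt0 R.
apply/andP; split.
  by apply: mulr_gt0 => //; apply: mulr_gt0; [apply: mulr_gt0 => //|rewrite invr_gt0].
have -> : j%:R * (2 * pi / p%:R) = (2 * j%:R / p%:R) * pi :> R.
  by field; rewrite gt_eqF.
by rewrite gtr_pMl // ltr_pdivrMr // mul1r.
Qed.

Hypothesis p4 : (p %% 4 = 1)%N.

Lemma Im_e_neq0 x : x != 0 -> complex.Im (e x) != 0.
Proof.
move=> x0; have j0 : (0 < val x)%N by rewrite lt0n; apply: contra x0 => /eqP h; apply/eqP/val_inj.
have jp : (val x < p)%N by have := ltn_ord x; rewrite [X in (_ < X)%N -> _]Fp_cast.
case: (ltnP (2 * val x) p) => h.
  by rewrite gt_eqF // Im_w_pos.
have -> : e x = conjc (e (- x)) by rewrite e_conj opprK.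
have -> : - x = (p - val x)%:R.
  by rewrite natrB ?(ltnW jp) // pchar_Fp_0 // sub0r -Fp_valE.
rewrite e_nat ImcJ oppr_eq0 lt0r_neq0 // Im_w_pos //; first by rewrite subn_gt0.
have : (2 * val x != p)%N by apply/eqP => E; move: p4; rewrite -E; lia.
lia.
Qed.

Lemma e_neq1 x : x != 0 -> e x != 1.
Proof. by move=> /Im_e_neq0; apply: contra => /eqP ->. Qed.

Lemma sum_e b : \sum_(n : 'F_p) e (b * n) = if b == 0 then p%:R else 0.
Proof.
case: eqP => [->|/eqP b0].
  under eq_bigr do rewrite mul0r e0.
  by rewrite sumr_const card_Fp.
have -> : \sum_(n : 'F_p) e (b * n) = \sum_(n : 'F_p) e n.
  by rewrite [RHS](reindex_inj (mulfI b0)).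
set S := \sum_n _.
have : e 1 * S = S.
  rewrite /S mulr_sumr [RHS](reindex_inj (addrI 1)) /=.
  by apply: eq_bigr => n _; rewrite eD.
move/eqP; rewrite -subr_eq0 -{2}(mul1r S) -mulrBl mulf_eq0 subr_eq0.
by rewrite (negbTE (e_neq1 (oner_neq0 _))) => /eqP.
Qed.

End Fp.

Section QB.
Variables (F : fieldType) (q : F).

Fixpoint gb (m k : nat) : F :=
  match m, k with
  | _, 0 => 1
  | 0, _.+1 => 0
  | m'.+1, k'.+1 => gb m' k' + q ^+ k'.+1 * gb m' k'.+1
  end.

Lemma gb_small m k : (m < k)%N -> gb m k = 0.
Proof.
elim: m k => [|m IH] [|k] //= mk.
by rewrite !IH ?mulr0 ?addr0 // ltnW.
Qed.

Lemma gbS m k : gb m.+1 k.+1 = gb m k + q ^+ k.+1 * gb m k.+1.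
Proof. by []. Qed.

Definition Pq k := \prod_(i < k) (1 - q ^+ i.+1).
Definition Qq m k := \prod_(i < k) (1 - q ^+ (m - i)).

Lemma Qq0 m k : (m < k)%N -> Qq m k = 0.
Proof. by move=> mk; rewrite /Qq (bigD1 (Ordinal mk)) //= subnn expr0 subrr mul0r. Qed.

Lemma gb_prod m k : gb m k * Pq k = Qq m k.
Proof.
elim: m k => [|m IH] [|k].
- by rewrite /Pq /Qq !big_ord0 mulr1.
- by rewrite /= mul0r Qq0.
- by rewrite /Pq /Qq !big_ord0 mulr1.
rewrite /=.
have hP : Pq k.+1 = Pq k * (1 - q ^+ k.+1) by rewrite /Pq big_ord_recr.
have hQ1 : Qq m.+1 k.+1 = (1 - q ^+ m.+1) * Qq m k by rewrite /Qq big_ord_recl.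
have hQ2 : Qq m k.+1 = Qq m k * (1 - q ^+ (m - k)) by rewrite /Qq big_ord_recr.
rewrite mulrDl -mulrA (IH k.+1) hQ1 hP mulrA (IH k) hQ2.
case: (leqP k m) => km.
  have -> : q ^+ m.+1 = q ^+ k.+1 * q ^+ (m - k) by rewrite -exprD; congr (_ ^+ _); lia.
  ring.
by rewrite Qq0 // !(mul0r, mulr0, add0r).
Qed.

Variable N : nat.
Hypothesis hq : forall i, (0 < i <= N)%N -> q ^+ i != 1.

Lemma Pq_neq0 k : (k <= N)%N -> Pq k != 0.
Proof.
move=> kN; rewrite /Pq; apply/prodf_neq0 => i _.
by rewrite subr_eq0 eq_sym hq //= (leq_trans (ltn_ord i)).
Qed.

Lemma gb_rec m k : (m < N)%N ->
  (1 - q ^+ k.+1) * gb m.+1 k.+1 = (1 - q ^+ m.+1) * gb m k.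
Proof.
move=> mN; case: (leqP k m) => km; last first.
  by rewrite !gb_small ?mulr0 // ltnS.
apply: (mulIf (Pq_neq0 (leq_trans km (ltnW mN)))).
have hP : Pq k.+1 = Pq k * (1 - q ^+ k.+1) by rewrite /Pq big_ord_recr.
have hQ1 : Qq m.+1 k.+1 = (1 - q ^+ m.+1) * Qq m k by rewrite /Qq big_ord_recl.
transitivity (Qq m.+1 k.+1); first by rewrite -gb_prod hP; ring.
by rewrite hQ1 -gb_prod; ring.
Qed.

Variable b : nat.
Definition fq m := \sum_(k < b.+1) (-1) ^+ k * gb m k.

Lemma fq_rec m : (m < N)%N -> (m.+1 < b)%N -> fq m.+2 = (1 - q ^+ m.+1) * fq m.
Proof.
move=> mN mb.
set g := gb m.+1.
set A := \sum_(k < b) (-1) ^+ k * g k.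
set Bq := \sum_(k < b) (-1) ^+ k * (q ^+ k.+1 * g k.+1).
set C := \sum_(k < b) (-1) ^+ k * g k.+1.
have E1 : \sum_(k < b.+1) (-1) ^+ k * g k = A.
  by rewrite big_ord_recr /= /g gb_small // mulr0 addr0.
have E2 : \sum_(k < b.+1) (-1) ^+ k * g k = 1 - C.
  rewrite big_ord_recl /= expr0 mul1r /C -sumrN; congr (_ + _).
  by apply: eq_bigr => i _; rewrite [(-1) ^+ i.+1]exprS mulN1r mulNr.
have L : fq m.+2 = 1 - A - Bq.
  rewrite /fq big_ord_recl expr0 mul1r -addrA; congr (_ + _).
  rewrite /A /Bq -sumrN -sumrB; apply: eq_bigr => i _.
  rewrite lift0 [(-1) ^+ i.+1]exprS mulN1r gbS -/g; ring.
have Rr : (1 - q ^+ m.+1) * fq m = C - Bq.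
  rewrite /fq big_ord_recr /= (gb_small (ltnW mb)) mulr0 addr0 mulr_sumr.
  rewrite /C /Bq -sumrB; apply: eq_bigr => i _.
  rewrite mulrCA -gb_rec // /g; ring.
by rewrite L Rr -E1 E2; ring.
Qed.

Lemma fq_even n : (2 * n <= N)%N -> (N < b.+1)%N ->
  fq (2 * n) = \prod_(t < n) (1 - q ^+ (2 * t).+1).
Proof.
move=> nN Nb; elim: n nN => [|n IH] nN.
  rewrite big_ord0 /fq big_ord_recl /= expr0 mul1r big1 ?addr0 // => i _.
  by rewrite mulr0.
rewrite big_ord_recr /= -IH; last by lia.
have -> : (2 * n.+1 = (2 * n).+2)%N by lia.
rewrite fq_rec; [by rewrite mulrC | lia | lia].
Qed.

End QB.

Section Gauss.
Variables (R : realType) (p : nat).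
Hypothesis pr : prime p.
Hypothesis p4 : (p %% 4 = 1)%N.
Variable c : 'F_p.
Hypothesis hc : c ^+ 2 = -1.
Local Notation w := (expi R p).
Local Notation e := (@etaF R p).

Lemma p_gt2 : (2 < p)%N.
Proof. have := prime_gt1 pr; lia. Qed.

Lemma two_neq0 : (2%:R : 'F_p) != 0.
Proof.
apply/eqP => /(congr1 (@nat_of_ord _)); rewrite val_Fp_nat // modn_small ?p_gt2 //.
Qed.

Lemma c_neq0 : c != 0.
Proof. apply/eqP => c0; move: hc; rewrite c0 expr0n /= => /eqP; rewrite eq_sym oppr_eq0 oner_eq0. by []. Qed.

Lemma eM x y : e x * e y = e (x + y).
Proof. by rewrite eD. Qed.

Definition G := \sum_(n : 'F_p) e (n ^+ 2).

Lemma G2 : G ^+ 2 = p%:R.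
Proof.
have inner n : \sum_(m : 'F_p) e (n ^+ 2) * e (m ^+ 2) =
    \sum_(t : 'F_p) e (- t ^+ 2) * e ((- (2%:R * t)) * n).
  rewrite (reindex_inj (h := fun t => c * (n + t))) /=; last first.
    by move=> u v /(mulfI c_neq0) /addrI.
  apply: eq_bigr => t _; rewrite !eM; congr e; rewrite exprMn hc; ring.
rewrite expr2 /G mulr_suml.
under eq_bigr => n _ do rewrite mulr_sumr inner.
rewrite exchange_big /=.
under eq_bigr => t _ do rewrite -mulr_sumr (sum_e R pr p4).
rewrite (bigD1 0) //= big1 ?addr0; last first.
  move=> t t0; rewrite oppr_eq0 mulf_eq0 (negbTE two_neq0) /= (negbTE t0) mulr0 //.
by rewrite mulr0 oppr0 eqxx expr0n /= oppr0 e0 mul1r.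
Qed.

Lemma eX x n : e x ^+ n = e (x *+ n).
Proof. by elim: n => [|n IH]; rewrite ?e0 // exprS IH mulrS eD. Qed.

Lemma e_sum n (f : 'I_n -> 'F_p) : e (\sum_(i < n) f i) = \prod_(i < n) e (f i).
Proof. exact: (big_morph e (eD R pr) (e0 R p)). Qed.

Lemma nat_neq0 i : (0 < i < p)%N -> (i%:R : 'F_p) != 0.
Proof.
move=> /andP [i0 ip]; apply/eqP => /(congr1 (@nat_of_ord _)).
by rewrite val_Fp_nat // modn_small //= => i00; move: i0; rewrite i00.
Qed.

Local Notation q := (e (- 2%:R)).

Lemma hq i : (0 < i <= p.-1)%N -> q ^+ i != 1.
Proof.
move=> /andP [i0 ip]; rewrite eX; apply: (@e_neq1 R p pr p4).
rewrite -[X in X != 0]mulr_natr; apply: mulf_neq0; first by rewrite oppr_eq0 two_neq0.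
apply: nat_neq0; have := prime_gt1 pr; lia.
Qed.

Lemma gb_val k : (k <= p.-1)%N ->
  gb q (p.-1) k = \prod_(i < k) (- e (2%:R * (i.+1)%:R)).
Proof.
move=> kN; apply: (mulIf (Pq_neq0 hq kN)).
rewrite gb_prod /Qq /Pq -big_split /=; apply: eq_bigr => i _.
set X := 2%:R * (i.+1)%:R.
have ik : (i <= p.-1)%N by apply: leq_trans (ltnW (ltn_ord i)) kN.
have h1 : (- 2%:R) *+ (p.-1 - i) = X :> 'F_p.
  by rewrite -[LHS]mulr_natr natrB // Fp_pred // /X -[(i.+1)%:R]natr1; ring.
have h2 : (- 2%:R) *+ i.+1 = - X :> 'F_p.
  by rewrite -[LHS]mulr_natr /X; ring.
rewrite !eX h1 h2 mulrBr mulr1 mulNr eM addrN e0; ring.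
Qed.

Lemma sum_nat_2 k : \sum_(i < k) (2%:R * (i.+1)%:R : 'F_p) = (k * k.+1)%:R.
Proof.
elim: k => [|k IH]; first by rewrite big_ord0 mul0n.
by rewrite big_ord_recr /= IH -natrM -natrD; congr _%:R; lia.
Qed.

Lemma sum_ord_eq (V : nmodType) N1 N2 (f : nat -> V) :
  N1 = N2 -> \sum_(i < N1) f i = \sum_(i < N2) f i.
Proof. by move->. Qed.

Lemma fq_sum : fq q (p.-1) (p.-1) = \sum_(n : 'F_p) e (n * (n + 1)).
Proof.
rewrite /fq.
transitivity (\sum_(k < p.-1.+1) e ((k * k.+1)%:R)).
  apply: eq_bigr => k _; rewrite gb_val; last by rewrite -ltnS ltn_ord.
  rewrite prodrN card_ord mulrA -exprMn.
  by rewrite mulrNN mulr1 expr1n mul1r -e_sum sum_nat_2.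
transitivity (\sum_(n : 'F_p) e (((val n) * (val n).+1)%:R)); last first.
  by apply: eq_bigr => n _; rewrite natrM -natr1 -Fp_valE.
rewrite (sum_ord_eq (fun k => e ((k * k.+1)%:R)) (prednK (prime_gt0 pr))).
by rewrite (sum_ord_eq (fun k => e ((k * k.+1)%:R)) (Fp_cast pr)).
Qed.

Local Notation h := ((2%:R : 'F_p)^-1).

Lemma G_shift : G = e (h ^+ 2) * \sum_(n : 'F_p) e (n * (n + 1)).
Proof.
rewrite /G (reindex_inj (h := fun n => n + h) (addIr h)) mulr_sumr.
apply: eq_bigr => n _; rewrite eM; congr e.
have h2 : h * 2%:R = 1 by rewrite mulVf // two_neq0.
rewrite sqrrD -mulrnAr -[h *+ 2]mulr_natr h2 mulr1; ring.
Qed.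

Local Notation kk := (p.-1 %/ 4)%N.

Lemma pk : p = (4 * kk).+1.
Proof. have := prime_gt0 pr; lia. Qed.

Lemma sum_odd n : \sum_(t < n) (((2 * t).+1)%:R : 'F_p) = (n * n)%:R.
Proof.
elim: n => [|n IH]; first by rewrite big_ord0 mul0n.
by rewrite big_ord_recr /= IH -natrD; congr _%:R; lia.
Qed.

Lemma h2E : ((2 * kk * (2 * kk))%:R : 'F_p) = h ^+ 2.
Proof.
have E : (2 * kk)%:R = - h :> 'F_p.
  apply: (mulfI two_neq0); rewrite -natrM mulrN mulfV ?two_neq0 //.
  by rewrite -Fp_pred //; congr _%:R; have := pk; lia.
by rewrite natrM E mulrNN expr2.
Qed.

Lemma e_neq0 x : e x != 0.
Proof. by apply/eqP => h0; move: (eM x (- x)); rewrite h0 mul0r addrN e0 => /eqP; rewrite eq_sym oner_eq0. Qed.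

Definition sgs t := complex.Im (e ((2 * t).+1)%:R).

Lemma G_prod : G = \prod_(t < 2 * kk) (2%:R * (sgs t)%:C * 'i).
Proof.
have E0 : e (- h ^+ 2) * G = \prod_(t < 2 * kk) (1 - q ^+ (2 * t).+1).
  rewrite G_shift mulrA eM addNr e0 mul1r -fq_sum.
  have E : p.-1 = (2 * (2 * kk))%N by rewrite {1}pk /=; lia.
  have := @fq_even _ _ _ hq (p.-1) (2 * kk); rewrite -E => -> //.
have E1 t : 1 - q ^+ (2 * t).+1 =
    e (- ((2 * t).+1)%:R) * (2%:R * (sgs t)%:C * 'i).
  rewrite /sgs -subcJ e_conj // mulrBr !eM addNr e0 eX; congr (_ - e _).
  rewrite -[LHS]mulr_natr; ring.
rewrite (eq_bigr _ (fun (t : 'I_(2 * kk)) _ => E1 t)) in E0.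
rewrite big_split /= -e_sum sumrN sum_odd h2E in E0.
by apply: (mulfI (e_neq0 (- h ^+ 2))).
Qed.

Lemma sgs_pos t : (t < kk)%N -> 0 < sgs t.
Proof.
move=> tk; rewrite /sgs e_nat //; apply: Im_w_pos => //; have := pk; lia.
Qed.

Lemma sgs_neg t : (t < kk)%N -> 0 < - sgs (kk + t).
Proof.
move=> tk; rewrite /sgs -ImcJ e_conj //.
have jp : ((2 * (kk + t)).+1 <= p)%N by have := pk; lia.
have -> : - ((2 * (kk + t)).+1)%:R = (p - (2 * (kk + t)).+1)%:R :> 'F_p.
  by rewrite natrB // pchar_Fp_0 // sub0r.
rewrite e_nat //; apply: Im_w_pos => //; have := pk; lia.
Qed.

Lemma cmul_i (a b : R) :
  (2%:R * a%:C * 'i) * (2%:R * b%:C * 'i) = (4%:R * a * - b)%:C :> R[i].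
Proof.
transitivity ((2%:R * 2%:R) * (a%:C * b%:C) * ('i * 'i) : R[i]); first by ring.
have i2 : ('i * 'i : R[i]) = -1 by apply/eqP; rewrite eq_complex /=; simpc.
rewrite i2 !rmorphM rmorphN /= rmorph_nat; ring.
Qed.

Lemma G_pos : exists r : R, 0 < r /\ G = r%:C.
Proof.
rewrite G_prod.
have -> : (2 * kk = kk + kk)%N by lia.
rewrite big_split_ord /= -big_split /=.
under eq_bigr => t _ do rewrite cmul_i.
rewrite -rmorph_prod; eexists; split; last by [].
apply: prodr_gt0 => t _; apply: mulr_gt0; last exact: sgs_neg.
by apply: mulr_gt0; [rewrite ltr0n | exact: sgs_pos].
Qed.

Lemma G_val : G = (Num.sqrt (p%:R : R))%:C.
Proof.
have [r [r0 Gr]] := G_pos.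
have := G2; rewrite Gr -rmorphXn -(rmorph_nat (real_complex R)) => /complexI <-.
by rewrite sqrtr_sqr ger0_norm // ltW.
Qed.

End Gauss.

Section Main.
Variables (R : realType) (p : nat).
Hypothesis pr : prime p.
Hypothesis p4 : (p %% 4 = 1)%N.
Variable a : 'F_p.
Hypothesis ha : (p.-1).-primitive_root a.
Local Notation e := (@etaF R p).
Local Notation kk := (p.-1 %/ 4)%N.
Local Notation th := (expi R p.-1).

Lemma fermat (j : 'F_p) : j != 0 -> j ^+ p.-1 = 1.
Proof.
move=> j0; apply: (mulIf j0); rewrite mul1r -exprSr prednK ?prime_gt0 //.
by have := expf_card j; rewrite card_Fp.
Qed.

Lemma dlogP (j : 'F_p) : j != 0 -> a ^+ dlog a j = j /\ (dlog a j < p.-1)%N.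
Proof.
move=> j0; have [i hi] := prim_rootP ha (fermat j0).
have hh : has (fun m => a ^+ m == j) (iota 0 p.-1).
  by apply/hasP; exists (val i); [rewrite mem_iota /= ltn_ord | rewrite hi].
have := nth_find 0 hh; move: hh; rewrite has_find size_iota => hh.
by rewrite nth_iota // add0n => /eqP.
Qed.

Lemma hc : (a ^+ kk) ^+ 2 = -1.
Proof.
have pk := pk pr p4.
have k0 : (0 < kk)%N by have := prime_gt1 pr; lia.
set y := (a ^+ kk) ^+ 2.
have y1 : y ^+ 2 = 1.
  by rewrite /y -!exprM -(prim_expr_order ha); congr (_ ^+ _); lia.
have yn1 : y != 1.
  rewrite /y -exprM -(expr0 a) (eq_prim_root_expr ha) mod0n modn_small; lia.
have : (y - 1) * (y + 1) == 0 by rewrite -subr_sqr expr1n y1 subrr.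
rewrite mulf_eq0 subr_eq0 (negbTE yn1) /= addr_eq0 => /eqP //.
Qed.

Lemma th_kk : th ^+ kk = 'i.
Proof.
have pk := pk pr p4.
have P : (p.-1)%:R = 4%:R * kk%:R :> R by rewrite -natrM; congr _%:R; lia.
have k0 : kk%:R != 0 :> R by rewrite pnatr_eq0; have := prime_gt1 pr; lia.
rewrite expiX; set t := (X in cos X).
have -> : t = pi / 2 by rewrite /t P; field.
rewrite cos_pihalf; set u := (X in sin X).
have -> : u = pi / 2 by rewrite /u P; field.
by rewrite sin_pihalf.
Qed.

Local Notation c := (a ^+ kk).
Local Notation h := ((2%:R : 'F_p)^-1).

Lemma c0 : c != 0.
Proof. exact: (c_neq0 hc). Qed.

Lemma Fp_id (x y A B : 'F_p) :
  x - y = (2%:R * h - 1) * A + (c ^+ 2 + 1) * B -> x = y.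
Proof.
rewrite mulfV ?(two_neq0 pr p4) // subrr mul0r hc addNr mul0r addr0.
by move/eqP; rewrite subr_eq0 => /eqP.
Qed.

Local Notation sq := (Num.sqrt (p%:R : R)).

Lemma complete m : \sum_(n : 'F_p) e (m * n) * e (h * c * n ^+ 2) =
  e (h * c * m ^+ 2) * sq%:C.
Proof.
rewrite -(G_val R pr p4 hc) /G mulr_sumr.
have uh : (1 + c) * h != 0.
  apply: mulf_neq0; last by rewrite invr_eq0 (two_neq0 pr p4).
  apply/eqP => /eqP; rewrite addr_eq0 => /eqP E.
  have E' : c = -1 by rewrite -[c]opprK -E.
  move: hc; rewrite E' expr2 mulrNN mulr1 => /eqP; rewrite -subr_eq0 opprK => H.
  by move: (two_neq0 pr p4); rewrite -[2%:R]/(1 *+ 2) mulr2n (eqP H) eqxx.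
rewrite [RHS](reindex_inj (mulfI uh)) [LHS](reindex_inj (addIr (c * m))) /=.
apply: eq_bigr => n _; rewrite !(eM R pr); congr e.
apply: (Fp_id (A := -(m * n + c * m ^+ 2) - c * h * n ^+ 2) (B := 2%:R * h * n * m + h * c * m ^+ 2 - h ^+ 2 * n ^+ 2)).
ring.
Qed.

Lemma ii : ('i * 'i : R[i]) = -1.
Proof. by apply/eqP; rewrite eq_complex /=; simpc. Qed.

Lemma th_p1 : th ^+ p.-1 = 1.
Proof.
have pk := pk pr p4.
transitivity ((th ^+ kk) ^+ 4); first by rewrite -exprM; congr (_ ^+ _); lia.
rewrite th_kk !exprS expr0 mulr1; apply/eqP; by rewrite eq_complex /=; simpc.
Qed.

Lemma th_mod n : th ^+ (n %% p.-1) = th ^+ n.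
Proof. by rewrite {2}(divn_eq n p.-1) exprD mulnC exprM th_p1 expr1n mul1r. Qed.

Lemma a0 : a != 0.
Proof. rewrite (prim_root_eq0 ha); have := prime_gt1 pr; lia. Qed.

Lemma th_dlog_c j : j != 0 -> th ^+ dlog a (c * j) = 'i * th ^+ dlog a j.
Proof.
move=> j0; have cj0 : c * j != 0 by rewrite mulf_neq0 ?c0.
have [h1 _] := dlogP cj0; have [h2 _] := dlogP j0.
have : a ^+ dlog a (c * j) == a ^+ (kk + dlog a j) by rewrite exprD h1 h2.
rewrite (eq_prim_root_expr ha) => /eqP E.
by rewrite -th_mod E th_mod exprD th_kk.
Qed.

Variable x : nat.
Local Notation chi j := (th ^+ (x * dlog a j)).

Lemma chi_c j : j != 0 -> chi (c * j) = 'i ^+ x * chi j.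
Proof. by move=> j0; rewrite mulnC exprM th_dlog_c // exprMn -exprM mulnC. Qed.

Lemma rhs_x m : \sum_(j : 'F_p | j != 0) chi j * e (c * (j - m) ^+ 2 - h * c * m ^+ 2) =
  'i ^+ x * \sum_(j : 'F_p | j != 0) chi j * e (- (c * j ^+ 2) + 2%:R * j * m + h * c * m ^+ 2).
Proof.
rewrite (reindex_inj (mulfI c0)) /= mulr_sumr.
rewrite (eq_bigl (fun j => j != 0)); last by move=> j; rewrite mulf_eq0 negb_or c0.
apply: eq_bigr => j j0.
have E : c * (c * j - m) ^+ 2 - h * c * m ^+ 2 = - (c * j ^+ 2) + 2%:R * j * m + h * c * m ^+ 2.
  by apply: (Fp_id (A := -(c * m ^+ 2)) (B := c * j ^+ 2 - 2%:R * j * m)); ring.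
rewrite E chi_c //; exact: esym (mulrA _ _ _).
Qed.

Lemma main_x m (K0 K1 : R[i]) : K0 * sq%:C = 1 ->
  K0 * \sum_(n : 'F_p) e (m * n) * (K1 * \sum_(j : 'F_p | j != 0) chi j * e (c * (j - n) ^+ 2 - h * c * n ^+ 2)) =
  K1 * \sum_(j : 'F_p | j != 0) chi j * e (- (c * j ^+ 2) + 2%:R * j * m + h * c * m ^+ 2).
Proof.
move=> hK.
have S n : \sum_(j : 'F_p | j != 0) chi j * e (c * (j - n) ^+ 2 - h * c * n ^+ 2) =
    \sum_(j : 'F_p | j != 0) (chi j * e (c * j ^+ 2)) * (e ((- (2%:R * c * j)) * n) * e (h * c * n ^+ 2)).
  apply: eq_bigr => j _.
  have E : c * (j - n) ^+ 2 - h * c * n ^+ 2 = c * j ^+ 2 + (- (2%:R * c * j)) * n + h * c * n ^+ 2.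
    by apply: (Fp_id (A := -(c * n ^+ 2)) (B := 0)); ring.
  rewrite E !(eD R pr); ring.
under eq_bigr => n _ do rewrite S mulrCA mulr_sumr.
rewrite -mulr_sumr exchange_big /=.
rewrite mulrCA; congr (K1 * _); rewrite mulr_sumr; apply: eq_bigr => j _.
set A := chi j * e (c * j ^+ 2).
transitivity (K0 * (A * \sum_(i : 'F_p) e ((m - 2%:R * c * j) * i) * e (h * c * i ^+ 2))).
  congr (K0 * _); rewrite mulr_sumr; apply: eq_bigr => i _.
  have Ei : (m - 2%:R * c * j) * i = m * i + (- (2%:R * c * j)) * i by ring.
  rewrite Ei (eD R pr); ring.
rewrite complete.
have E3 : c * j ^+ 2 + h * c * (m - 2%:R * c * j) ^+ 2 = - (c * j ^+ 2) + 2%:R * j * m + h * c * m ^+ 2.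
  by apply: (Fp_id (A := 2%:R * j * m - 2%:R * c * j ^+ 2) (B := - (4%:R * h * j * m) + 4%:R * h * c * j ^+ 2)); ring.
rewrite -E3 (eD R pr) /A.
transitivity ((K0 * sq%:C) * (chi j * (e (c * j ^+ 2) * e (h * c * (m - 2%:R * c * j) ^+ 2)))); first by ring.
by rewrite hK mul1r.
Qed.

End Main.

Unset Implicit Arguments.

Theorem theorem4 (R : realType) (p : nat) (a : 'F_p) (x : nat) :
  prime p -> (p %% 4 = 1)%N -> (p.-1).-primitive_root a -> (x < p)%N ->
  @DFT R p (@phix R p a x) = (fun n => (- imagC R) ^+ x * @phix R p a x n).
Proof.
move=> pr p4 ha xp.
apply: boolp.funext => m.
rewrite /DFT /phix /=.
set sq := Num.sqrt (p%:R : R).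
have sq0 : sq != 0 by rewrite sqrtr_eq0 -ltNge ltr0n prime_gt0.
have hK : (sq^-1)%:C * sq%:C = 1 :> R[i].
  by rewrite -rmorphM /= mulVf.
case: (posnP x) => [->|x0].
  rewrite expr0 mul1r.
  under eq_bigr => n _ do rewrite mulrCA.
  rewrite -mulr_sumr (complete R pr p4 ha) /sq.
  set E := etaF _ _.
  transitivity (((Num.sqrt (p%:R : R))^-1)%:C * (Num.sqrt (p%:R : R))%:C * (((Num.sqrt (p%:R : R))^-1)%:C * E)); first by ring.
  by rewrite hK mul1r.

rewrite (main_x pr p4 ha x m _ hK) (rhs_x R pr p4 ha x m).
rewrite [RHS]mulrCA; congr (_ * _); rewrite [RHS]mulrA -exprMn.
have -> : (- imagC R * 'i) = 1 by apply/eqP; rewrite eq_complex /=; simpc.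
by rewrite expr1n mul1r.
Qed.
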